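(* If $G$ is a finite, connected, weakly-cliqued graph with $\chi(G)\ge 3$, then $G$ is trivially power-colorable.
   Context: Graphs are simple and undirected; a $k$-coloring is a proper coloring with colors in $\{0,\dots,k-1\}$. A graph $G$ with $\chi(G)=k$ is weakly-cliqued if every vertex lies in a clique of size $k$. For graphs $(G_i)_{i\in I}$, the product $\times_{i\in I}G_i$ has vertex set $\times_{i\in I}V(G_i)$, with $(u_i)$ adjacent to $(v_i)$ iff $u_iv_i\in E(G_i)$ for all $i$; $G^n$ is the product of $n$ copies of $G$. A coloring $\Phi$ of $\times_{i\in I}G_i$ is trivial if there exist $i^*\in I$ and a proper coloring $\phi$ of $G_{i^*}$ with $\Phi(v)=\phi(v_{i^*})$ for all $v$. A graph $H$ is trivially power-colorable if for every positive integer $n$, every $\chi(H)$-coloring of $H^n$ (viewed as the product of $n$ copies of $H$) is trivial. *)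

(* Defs.v *)
From mathcomp Require Import all_boot.
Set Implicit Arguments. Unset Strict Implicit. Unset Printing Implicit Defensive.

Definition simple_graph (T : finType) (e : rel T) : Prop :=
  symmetric e /\ irreflexive e.

Definition proper_coloring (T : Type) (e : rel T) (k : nat) (c : T -> 'I_k) : Prop :=
  forall x y, e x y -> c x != c y.

Definition colorableb (T : finType) (e : rel T) (k : nat) : bool :=
  [exists c : {ffun T -> 'I_k}, [forall x, forall y, e x y ==> (c x != c y)]].

Lemma colorable_card (T : finType) (e : rel T) :
  irreflexive e -> exists k, colorableb e k.
Proof.
move=> irr; exists #|T|; apply/existsP.
exists [ffun x => enum_rank x]; apply/forallP => x; apply/forallP => y.
apply/implyP => exy; rewrite !ffunE; apply/negP => /eqP/enum_rank_inj Exy.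
by subst; rewrite irr in exy.
Qed.

(* chromatic number: the least k admitting a proper k-coloring.  For a loopless
   graph some k <= #|T| works (lemma colorable_card), so searching 0..#|T| suffices. *)
Definition chi (T : finType) (e : rel T) : nat :=
  find (colorableb e) (iota 0 #|T|.+1).

Definition clique (T : finType) (e : rel T) (K : {set T}) : Prop :=
  forall x y, x \in K -> y \in K -> x != y -> e x y.

Definition weakly_cliqued (T : finType) (e : rel T) : Prop :=
  forall v, exists K : {set T}, [/\ v \in K, clique e K & #|K| = chi e].

Definition connected (T : finType) (e : rel T) : Prop :=
  forall x y, connect e x y.

Definition power_rel (T : finType) (e : rel T) (n : nat) : rel {ffun 'I_n -> T} :=
  fun u v => [forall i, e (u i) (v i)].

Definition trivial_coloring (T : finType) (e : rel T) (n k : nat)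
    (Phi : {ffun 'I_n -> T} -> 'I_k) : Prop :=
  exists (i : 'I_n) (phi : T -> 'I_k),
    proper_coloring e phi /\ forall v, Phi v = phi (v i).

Definition trivially_power_colorable (T : finType) (e : rel T) : Prop :=
  forall n : nat, 0 < n ->
  forall Phi : {ffun 'I_n -> T} -> 'I_(chi e),
    proper_coloring (@power_rel T e n) Phi -> trivial_coloring e Phi.

(* Main.v *)
Require Import Defs.
From mathcomp Require Import all_boot fingroup perm.
Set Implicit Arguments. Unset Strict Implicit. Unset Printing Implicit Defensive.

Definition clq (T : Type) (e : rel T) k (f : 'I_k -> T) : Prop :=
  forall i j, i != j -> e (f i) (f j).

Lemma other k (j : 'I_k) : 1 < k -> exists j' : 'I_k, j' != j.
Proof.
move=> k1; have k0 : 0 < k by apply: ltnW.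
case: j => m Hm; case: (eqVneq m 0) => Hj.
- by exists (Ordinal k1); apply/eqP => /(congr1 val) /=; rewrite Hj.
- exists (Ordinal k0); apply/eqP => /(congr1 val) /= H.
  by move: Hj; rewrite -H eqxx.
Qed.

Lemma bij_hit k (s : 'I_k -> 'I_k) :
  (forall i i', i != i' -> s i != s i') -> forall c, exists i, s i = c.
Proof.
move=> H c.
have inj : injective s.
  by move=> i i' E; apply/eqP; apply: contraT => /H; rewrite E eqxx.
have [g _ K] := injF_bij inj; by exists (g c).
Qed.

Lemma rect k (M : 'I_k -> 'I_k -> 'I_k) :
  (forall i i' j j', i != i' -> j != j' -> M i j != M i' j') ->
  forall s t p q, s != t -> p != q -> M s p = M s q \/ M s p = M t p.
Proof.
move=> HM s t p q st pq.
pose t' := tperm s p t.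
have t'p : t' != p.
  by rewrite /t' -{2}(tpermL s p) (inj_eq perm_inj) eq_sym.
pose pi : {perm 'I_k} := (tperm s p * tperm t' q)%g.
have pis : pi s = p by rewrite permM tpermL tpermD // eq_sym.
have pit : pi t = q by rewrite permM tpermL.
pose pi' : {perm 'I_k} := (tperm s t * pi)%g.
have pi's : pi' s = q by rewrite permM tpermL.
have pi't : pi' t = p by rewrite permM tpermR.
have Hinj : forall i i', i != i' -> M i (pi' i) != M i' (pi' i').
  by move=> i i' ii'; apply: HM; rewrite // (inj_eq perm_inj).
have [i Hi] := @bij_hit k (fun i => M i (pi' i)) Hinj (M s p).
case: (eqVneq i s) => [E|Hs]; first by left; rewrite -Hi E pi's.
case: (eqVneq i t) => [E|Ht]; first by right; rewrite -Hi E pi't.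
move: Hi; rewrite permM tpermD 1?eq_sym // => Hi.
have Hps : pi i != pi s by rewrite (inj_eq perm_inj).
have := HM i s (pi i) (pi s) Hs Hps.
by rewrite Hi pis eqxx.
Qed.

Lemma mat k (M : 'I_k -> 'I_k -> 'I_k) :
  (forall i i' j j', i != i' -> j != j' -> M i j != M i' j') ->
  (forall i j j', M i j = M i j') \/ (forall i i' j, M i j = M i' j).
Proof.
move=> HM.
case: (boolP [forall i, forall j, forall j', M i j == M i j']) => [H|].
  by left => i j j'; move: H => /forallP /(_ i) /forallP /(_ j) /forallP /(_ j') /eqP.
move=> /forallPn [s /forallPn [p /forallPn [q Hne]]].
right.
have key : forall p' q', M s p' != M s q' -> forall t, M t p' = M s p'.
  move=> p' q' Hpq t; case: (eqVneq t s) => [->//|ts].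
  have pq : p' != q' by apply: contraNneq Hpq => ->.
  case: (rect HM (s:=s) (t:=t) (p:=p') (q:=q')) => //; first by rewrite eq_sym.
    by move=> E; rewrite E eqxx in Hpq.
have colr : forall r t, M t r = M s r.
  move=> r t; case: (eqVneq (M s r) (M s p)) => Hr.
    by apply: (key r q); rewrite Hr.
  exact: (key r p).
by move=> i i' j; rewrite colr (colr j i').
Qed.

Lemma connect_ind' (T : finType) (e : rel T) (Q : T -> Prop) x :
  Q x -> (forall y z, Q y -> e y z -> Q z) -> forall y, connect e x y -> Q y.
Proof.
move=> Qx step y /connectP [p]; elim: p x Qx => [|z p IH] x Qx /=.
  by move=> _ ->.
by case/andP => exz Hp Ey; exact: IH (step _ _ Qx exz) Hp Ey.
Qed.

Lemma spread (T : finType) (e : rel T) k (cl : T -> 'I_k -> T) (i0 : 'I_k)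
  (P : ('I_k -> T) -> Prop) :
  1 < k -> connected e -> (forall v, clq e (cl v) /\ cl v i0 = v) ->
  (forall f g i j, clq e f -> clq e g -> e (f i) (g j) -> P f -> P g) ->
  forall f g, clq e f -> clq e g -> P f -> P g.
Proof.
move=> k1 conn Hcl Hstep f g cf cg Pf.
pose Q v := forall h j, clq e h -> h j = v -> P h.
have Qb : Q (f i0).
  move=> h j ch hj; have [i1 i10] := other i0 k1.
  apply: (Hstep f h i1 j) => //; rewrite hj; exact: cf.
have QQ : forall v, Q v.
  move=> v; apply: (connect_ind' Qb) (conn _ _) => y z Qy eyz h j ch hj.
  have [c1 c2] := Hcl y.
  apply: (Hstep (cl y) h i0 j) => //; first by rewrite c2 hj.
  exact: (Qy _ i0).
exact: (QQ (g i0) g i0).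
Qed.

Definition colt (A B : Type) k (Phi : A -> B -> 'I_k) (f : 'I_k -> A) (g : 'I_k -> B) :=
  forall i i' j, Phi (f i) (g j) = Phi (f i') (g j).
Definition rowt (A B : Type) k (Phi : A -> B -> 'I_k) (f : 'I_k -> A) (g : 'I_k -> B) :=
  forall i j j', Phi (f i) (g j) = Phi (f i) (g j').

Definition propc (A B : Type) (eA : rel A) (eB : rel B) k (Phi : A -> B -> 'I_k) :=
  forall a a' b b', eA a a' -> eB b b' -> Phi a b != Phi a' b'.

Lemma colorrow (A B : Type) (eA : rel A) (eB : rel B) k (Phi : A -> B -> 'I_k) f g :
  propc eA eB Phi -> clq eA f -> clq eB g -> colt Phi f g \/ rowt Phi f g.
Proof.
move=> HP cf cg.
have := @mat k (fun i j => Phi (f i) (g j)) (fun i i' j j' ii jj => HP _ _ _ _ (cf _ _ ii) (cg _ _ jj)).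
by case=> H; [right|left].
Qed.

Lemma L_colrow (A B : Type) (eA : rel A) (eB : rel B) k (Phi : A -> B -> 'I_k) f g g' j j' :
  1 < k -> propc eA eB Phi -> clq eA f -> clq eB g -> clq eB g' -> eB (g j) (g' j') ->
  colt Phi f g -> rowt Phi f g' -> False.
Proof.
move=> k1 HP cf cg cg' egg Hc Hr.
have Hinj : forall i i', i != i' -> Phi (f i) (g' j') != Phi (f i') (g' j').
  move=> i i' ii; have [j2 j2j] := other j' k1.
  rewrite (Hr i' j' j2); apply: HP; first exact: cf.
  by apply: cg'; rewrite eq_sym.
have [i Hi] := bij_hit Hinj (Phi (f j) (g j)).
have [i' i'i] := other i k1.
have := HP _ _ _ _ (cf i' i i'i) egg.
by rewrite Hi (Hc i' j j) eqxx.
Qed.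

Lemma L_rowcol (A B : Type) (eA : rel A) (eB : rel B) k (Phi : A -> B -> 'I_k) f g g' j j' :
  1 < k -> propc eA eB Phi -> clq eA f -> clq eB g -> clq eB g' -> eB (g j) (g' j') ->
  rowt Phi f g -> colt Phi f g' -> False.
Proof.
move=> k1 HP cf cg cg' egg Hr Hc.
have Hinj : forall i i', i != i' -> Phi (f i) (g j) != Phi (f i') (g j).
  move=> i i' ii; have [j2 j2j] := other j k1.
  rewrite (Hr i' j j2); apply: HP; [exact: cf|].
  by apply: cg; rewrite eq_sym.
have [i Hi] := bij_hit Hinj (Phi (f j') (g' j')).
have [i' i'i] := other i k1.
have ii' : i != i' by rewrite eq_sym.
have := HP _ _ _ _ (cf i i' ii') egg.
by rewrite Hi (Hc i' j' j') eqxx.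
Qed.

Lemma L1 (A B : Type) (eA : rel A) (eB : rel B) k (Phi : A -> B -> 'I_k) f g g' j j' :
  1 < k -> propc eA eB Phi -> clq eA f -> clq eB g -> clq eB g' -> eB (g j) (g' j') ->
  colt Phi f g -> colt Phi f g'.
Proof.
move=> k1 HP cf cg cg' egg Hc.
case: (colorrow HP cf cg') => // Hr.
by case: (L_colrow k1 HP cf cg cg' egg Hc Hr).
Qed.

Lemma L2 (A B : Type) (eA : rel A) (eB : rel B) k (Phi : A -> B -> 'I_k) f g g' j j' :
  1 < k -> propc eA eB Phi -> clq eA f -> clq eB g -> clq eB g' -> eB (g j) (g' j') ->
  rowt Phi f g -> rowt Phi f g'.
Proof.
move=> k1 HP cf cg cg' egg Hr.
case: (colorrow HP cf cg') => // Hc.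
by case: (L_rowcol k1 HP cf cg cg' egg Hr Hc).
Qed.

Definition swp (A B : Type) k (Phi : A -> B -> 'I_k) := fun b a => Phi a b.

Lemma swp_proper (A B : Type) (eA : rel A) (eB : rel B) k (Phi : A -> B -> 'I_k) :
  propc eA eB Phi -> propc eB eA (swp Phi).
Proof. by move=> HP b b' a a' ebb eaa; exact: HP. Qed.

Lemma L3 (A B : Type) (eA : rel A) (eB : rel B) k (Phi : A -> B -> 'I_k) f f' g i i' :
  1 < k -> propc eA eB Phi -> clq eA f -> clq eA f' -> clq eB g -> eA (f i) (f' i') ->
  colt Phi f g -> colt Phi f' g.
Proof.
move=> k1 HP cf cf' cg eff Hc.
have Hr : rowt (swp Phi) g f by move=> j x y; exact: Hc.
have := L2 k1 (swp_proper HP) cg cf cf' eff Hr.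
by move=> H x y z; exact: H.
Qed.

Lemma TF_col (A B : finType) (eA : rel A) (eB : rel B) k (clA : A -> 'I_k -> A)
  (clB : B -> 'I_k -> B) (i0 : 'I_k) (Phi : A -> B -> 'I_k) f0 g0 :
  1 < k -> connected eA -> connected eB ->
  (forall a, clq eA (clA a) /\ clA a i0 = a) -> (forall b, clq eB (clB b) /\ clB b i0 = b) ->
  propc eA eB Phi -> clq eA f0 -> clq eB g0 -> colt Phi f0 g0 ->
  forall a a' b, Phi a b = Phi a' b.
Proof.
move=> k1 cA cB HA HB HP cf0 cg0 H0.
have st1 : forall g, clq eB g -> colt Phi f0 g.
  move=> g cg; apply: (spread (cl:=clB) (i0:=i0) (P := fun g => colt Phi f0 g) k1 cB HB _ cg0 cg H0).
  by move=> f1 g1 i j cf1 cg1 e1 P1; exact: (L1 k1 HP cf0 cf1 cg1 e1 P1).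
have st2 : forall f g, clq eA f -> clq eB g -> colt Phi f g.
  move=> f g cf cg; apply: (spread (cl:=clA) (i0:=i0) (P := fun f => colt Phi f g) k1 cA HA _ cf0 cf (st1 g cg)).
  by move=> f1 f2 i j cf1 cf2 e1 P1; exact: (L3 k1 HP cf1 cf2 cg e1 P1).
have st3 : forall (g : 'I_k -> B) (f : 'I_k -> A), clq eB g -> clq eA f -> forall i j, Phi (f i) (g j) = Phi (f0 i0) (g j).
  move=> g f cg cf.
  apply: (@spread _ _ _ clA i0
    (fun f => forall i j, Phi (f i) (g j) = Phi (f0 i0) (g j)) k1 cA HA _ f0 f cf0 cf); last first.
    by move=> i j; exact: (st2 f0 g cf0 cg).
  move=> f1 f2 i i' cf1 cf2 e12 P1 x j.
  have c1 := st2 f1 g cf1 cg; have c2 := st2 f2 g cf2 cg.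
  have Hinj : forall j1 j2, j1 != j2 -> Phi (f1 i) (g j1) != Phi (f1 i) (g j2).
    move=> j1 j2 jj; have [i2 i2i] := other i k1.
    rewrite (c1 i i2 j2); apply: HP; [by apply: cf1; rewrite eq_sym| exact: cg].
  have [j2 Hj2] := bij_hit Hinj (Phi (f2 i') (g j)).
  case: (eqVneq j2 j) => [E|jj].
    by rewrite (c2 x i') -Hj2 E P1.
  have := HP _ _ _ _ e12 (cg _ _ jj); by rewrite Hj2 eqxx.
move=> a a' b.
have [cb Eb] := HB b; have [ca Ea] := HA a; have [ca' Ea'] := HA a'.
by rewrite -Eb -Ea -Ea' !(st3 (clB b)).
Qed.

Lemma TF (A B : finType) (eA : rel A) (eB : rel B) k (clA : A -> 'I_k -> A)
  (clB : B -> 'I_k -> B) (i0 : 'I_k) (Phi : A -> B -> 'I_k) :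
  1 < k -> connected eA -> connected eB ->
  (forall a, clq eA (clA a) /\ clA a i0 = a) -> (forall b, clq eB (clB b) /\ clB b i0 = b) ->
  propc eA eB Phi ->
  (forall a a' b, Phi a b = Phi a' b) \/ (forall a b b', Phi a b = Phi a b').
Proof.
move=> k1 cA cB HA HB HP.
case: (pickP (fun _ : A => true)) => [a0 _|hA]; last by left => a; have := hA a.
case: (pickP (fun _ : B => true)) => [b0 _|hB]; last by left => a a' b; have := hB b.
have [ca _] := HA a0; have [cb _] := HB b0.
case: (colorrow HP ca cb) => H.
  by left; exact: (TF_col k1 cA cB HA HB HP ca cb H).
right => a b b'.
have Hc : colt (swp Phi) (clB b0) (clA a0) by move=> x y z; exact: H.
exact: (TF_col k1 cB cA HB HA (swp_proper HP) cb ca Hc b b' a).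
Qed.

Definition upd (T : Type) n (u : {ffun 'I_n -> T}) (j : 'I_n) (y : T) : {ffun 'I_n -> T} :=
  [ffun l => if l == j then y else u l].

Lemma upd_id (T : Type) n (u : {ffun 'I_n -> T}) j : upd u j (u j) = u.
Proof. by apply/ffunP => l; rewrite ffunE; case: eqP => [->|]. Qed.

Lemma upd_upd (T : Type) n (u : {ffun 'I_n -> T}) j y z : upd (upd u j y) j z = upd u j z.
Proof. by apply/ffunP => l; rewrite !ffunE; case: eqP. Qed.

Lemma upd_at (T : Type) n (u : {ffun 'I_n -> T}) j y : upd u j y j = y.
Proof. by rewrite ffunE eqxx. Qed.

Lemma power_conn (T : finType) (e : rel T) k (cl : T -> 'I_k -> T) (i0 i1 i2 : 'I_k) (n : nat) :
  i0 != i1 -> i1 != i2 -> i2 != i0 -> (forall v, clq e (cl v) /\ cl v i0 = v) ->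
  connected e -> connected (@power_rel T e n).
Proof.
move=> h01 h12 h20 Hcl conn.
have h10 : i1 != i0 by rewrite eq_sym.
have stepa : forall (u : {ffun 'I_n -> T}) j y, e (u j) y -> connect (@power_rel T e n) u (upd u j y).
  move=> u j y euy.
  pose w1 : {ffun 'I_n -> T} := [ffun l => if l == j then y else cl (u l) i1].
  pose w2 : {ffun 'I_n -> T} := [ffun l => if l == j then cl y i1 else cl (u l) i2].
  have e1 : @power_rel T e n u w1.
    apply/forallP => l; rewrite ffunE; case: eqP => [->|_] //.
    have [c E] := Hcl (u l); by rewrite -{1}E; apply: c.
  have e2 : @power_rel T e n w1 w2.
    apply/forallP => l; rewrite !ffunE; case: eqP => _.
      have [c E] := Hcl y; by rewrite -{1}E; apply: c.
    by have [c E] := Hcl (u l); apply: c.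
  have e3 : @power_rel T e n w2 (upd u j y).
    apply/forallP => l; rewrite !ffunE; case: eqP => _.
      have [c E] := Hcl y; by rewrite -{2}E; apply: c.
    have [c E] := Hcl (u l); by rewrite -{2}E; apply: c.
  exact: connect_trans (connect1 e1) (connect_trans (connect1 e2) (connect1 e3)).
have stepb : forall (u : {ffun 'I_n -> T}) j y, connect (@power_rel T e n) u (upd u j y).
  move=> u j y.
  apply: (@connect_ind' T e (fun z => connect (@power_rel T e n) u (upd u j z)) (u j)) (conn _ _).
    by rewrite upd_id connect0.
  move=> z z' cz ezz; apply: connect_trans cz _.
  rewrite -(upd_upd u j z z'); apply: stepa; by rewrite upd_at.
move=> u v.
pose w m : {ffun 'I_n -> T} := [ffun l : 'I_n => if l < m then v l else u l].
have Hw : forall m, connect (@power_rel T e n) u (w m).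
  elim=> [|m IH].
    by have -> : w 0 = u by apply/ffunP => l; rewrite ffunE.
  case: (ltnP m n) => Hm.
    have -> : w m.+1 = upd (w m) (Ordinal Hm) (v (Ordinal Hm)).
      apply/ffunP => l; rewrite !ffunE; case: eqP => [->|Hl] /=; first by rewrite ltnS leqnn.
      rewrite ltnS leq_eqVlt; case: eqP => //= Hlm; case: Hl; exact: val_inj.
    exact: connect_trans IH (stepb _ _ _).
  have -> : w m.+1 = w m.
    by apply/ffunP => l; rewrite !ffunE (leq_trans (ltn_ord l) Hm) (leq_trans (ltn_ord l) (leqW Hm)).
  exact: IH.
have -> : v = w n by apply/ffunP => l; rewrite ffunE ltn_ord.
exact: Hw.
Qed.

Lemma fchoice (A : Type) (B : choiceType) (P : A -> B -> bool) :
  (forall a, exists b, P a b) -> exists f : A -> B, forall a, P a (f a).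
Proof. move=> H; exists (fun a => xchoose (H a)) => a; exact: xchooseP. Qed.

Theorem mainTheorem11 (T : finType) (e : rel T) :
  simple_graph e -> connected e -> weakly_cliqued e -> 3 <= chi e ->
  trivially_power_colorable e.
Proof.
move=> [esy eirr] econn wcl k3.
have k0 : 0 < chi e by apply: leq_trans k3.
have k1 : 1 < chi e by apply: leq_trans k3.
pose i0 : 'I_(chi e) := Ordinal k0.
pose i1 : 'I_(chi e) := Ordinal k1.
pose i2 : 'I_(chi e) := Ordinal k3.
have h01 : i0 != i1 by [].
have h12 : i1 != i2 by [].
have h20 : i2 != i0 by [].
have excl : forall v, exists F : {ffun 'I_(chi e) -> T},
    [forall i, forall j, (i != j) ==> e (F i) (F j)] && (F i0 == v).
  move=> v; case: (wcl v) => K [vK cK cardK].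
  pose g (i : 'I_(chi e)) := enum_val (cast_ord (esym cardK) i).
  pose r := cast_ord cardK (enum_rank_in vK v).
  exists [ffun i => g (tperm i0 r i)]; apply/andP; split.
    apply/forallP => i; apply/forallP => j; apply/implyP => ij; rewrite !ffunE.
    apply: cK; [exact: enum_valP|exact: enum_valP|].
    by rewrite /g (inj_eq enum_val_inj) (inj_eq (@cast_ord_inj _ _ _)) (inj_eq perm_inj).
  by rewrite ffunE tpermL /g /r cast_ordK enum_rankK_in.
have [cl Hcl0] := fchoice excl.
have Hcl : forall v, clq e (fun i => cl v i) /\ cl v i0 = v.
  move=> v; have /andP [/forallP H1 /eqP H2] := Hcl0 v; split => // i j ij.
  by move: (H1 i) => /forallP /(_ j) /implyP; apply.
have [t0 _] : exists t : T, t \in T.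
  apply/card_gt0P; rewrite lt0n; apply/eqP => H0.
  have Hs : chi e <= #|T|.+1.
    by have := find_size (colorableb e) (iota 0 #|T|.+1); rewrite size_iota.
  by rewrite H0 in Hs; have := leq_trans k3 Hs.
have Q : forall n (Phi : {ffun 'I_n.+1 -> T} -> 'I_(chi e)),
    (forall x y, @power_rel T e n.+1 x y -> Phi x != Phi y) ->
    exists i : 'I_n.+1, forall u v : {ffun 'I_n.+1 -> T}, u i = v i -> Phi u = Phi v.
  elim=> [|n IH] Phi HPhi.
    exists ord0 => u v Huv; congr Phi; apply/ffunP => l; by rewrite (ord1 l).
  pose join (a : {ffun 'I_n.+1 -> T}) (b : T) : {ffun 'I_n.+2 -> T} :=
    [ffun l => if unlift ord_max l is Some l' then a l' else b].
  pose proj (u : {ffun 'I_n.+2 -> T}) : {ffun 'I_n.+1 -> T} := [ffun l => u (lift ord_max l)].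
  have joinK : forall u, join (proj u) (u ord_max) = u.
    move=> u; apply/ffunP => l; rewrite ffunE; case: unliftP => [l' ->|->] //.
    by rewrite ffunE.
  pose clA (a : {ffun 'I_n.+1 -> T}) (s : 'I_(chi e)) : {ffun 'I_n.+1 -> T} :=
    [ffun l => cl (a l) s].
  have HclA : forall a, clq (@power_rel T e n.+1) (clA a) /\ clA a i0 = a.
    move=> a; split.
      move=> s s' ss; apply/forallP => l; rewrite !ffunE; exact: (proj1 (Hcl (a l))).
    by apply/ffunP => l; rewrite ffunE (proj2 (Hcl (a l))).
  have connA := power_conn (n := n.+1) h01 h12 h20 Hcl econn.
  have HP : propc (@power_rel T e n.+1) e (fun a b => Phi (join a b)).
    move=> a a' b b' Haa ebb; apply: HPhi; apply/forallP => l; rewrite !ffunE.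
    by case: (unlift ord_max l) => [l'|] //; exact: (forallP Haa l').
  case: (TF k1 connA econn HclA Hcl HP) => /= H.
    exists ord_max => u v Huv; rewrite -(joinK u) -(joinK v) Huv; exact: H.
  pose psi a := Phi (join a t0).
  have Hpsi : forall x y, @power_rel T e n.+1 x y -> psi x != psi y.
    move=> a a' Haa; rewrite /psi (H a' t0 (cl t0 i1)); apply: HP => //.
    have [c1 c2] := Hcl t0; rewrite -{1}c2; exact: c1.
  have [i Hi] := IH psi Hpsi.
  exists (lift ord_max i) => u v Huv.
  rewrite -(joinK u) -(joinK v) (H _ (u ord_max) t0) (H _ (v ord_max) t0).
  apply: Hi; by rewrite !ffunE.
move=> [//|n] _ Phi HPhi.
have [i Hi] := Q n Phi HPhi.
exists i, (fun x => Phi [ffun _ => x]); split.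
  by move=> x y exy; apply: HPhi; apply/forallP => l; rewrite !ffunE.
by move=> v; apply: Hi; rewrite ffunE.
Qed.
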